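(* Let $R$ be a commutative unital ring which is Noetherian and quasi-Euclidean, and let $M$ be a finitely generated $R$-module. Let $M \cong R/\mathfrak{a}_1 \times R/\mathfrak{a}_2 \times \cdots \times R/\mathfrak{a}_k$ be the invariant factor decomposition of $M$, where $\mathfrak{a}_1,\dots,\mathfrak{a}_k$ are ideals with $R \neq \mathfrak{a}_1 \supseteq \mathfrak{a}_2 \supseteq \cdots \supseteq \mathfrak{a}_k$, and identify $M$ with this product. For $1\le i\le k$ let $e_i \in M$ be the element with $i$-th coordinate $1 \in R/\mathfrak{a}_i$ and $j$-th coordinate $0$ for $j \neq i$. Then for every $n \ge k$, every row $\mathbf{m} \in \mathrm{Um}_n(M)$ is $\mathrm{E}_n(R)$-equivalent to a row of the form $(\delta e_1, e_2, \dots, e_k, 0, \dots, 0)$ (with $n-k$ trailing zeros) for some $\delta \in (R/\mathfrak{a}_1)^{\times}$. Moreover, if $n > k$, then $\delta$ can be taken to be $1$.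
   Context: All rings are commutative with identity; $R^{\times}$ denotes the unit group of $R$. A ring $R$ is quasi-Euclidean if for every $n \ge 2$ and every $\mathbf{r} = (r_1,\dots,r_n) \in R^n$ there exist $E \in \mathrm{E}_n(R)$ and $d \in R$ with $(d,0,\dots,0) = \mathbf{r}E$. Here $\mathrm{E}_n(R)$ is the subgroup of $\mathrm{GL}_n(R)$ generated by the elementary matrices (matrices differing from the identity in a single off-diagonal entry). For a finitely generated $R$-module $M$ and $n\ge 1$, $\mathrm{Um}_n(M)$ is the set of $\mathbf{m}=(m_1,\dots,m_n)\in M^n$ whose components generate $M$. $\mathrm{GL}_n(R)$ acts on $M^n$ (and on $\mathrm{Um}_n(M)$) by right multiplication: $(\mathbf{m}A)_j = \sum_i m_i A_{ij}$. Two rows $\mathbf{m},\mathbf{m}'\in\mathrm{Um}_n(M)$ are $\mathrm{E}_n(R)$-equivalent if $\mathbf{m}'=\mathbf{m}E$ for some $E\in\mathrm{E}_n(R)$. The element $\delta e_1$ means $e_1$ with first coordinate replaced by $\delta$ (equivalently, $\tilde\delta e_1$ for any lift $\tilde\delta\in R$ of $\delta$). An invariant factor decomposition of a finitely generated module over such a ring exists and is unique, and $k$ equals the minimal number of generators of $M$. *)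

(* Defs.v *)
From HB Require Import structures.
From mathcomp Require Import all_boot all_order all_algebra.
Set Implicit Arguments. Unset Strict Implicit. Unset Printing Implicit Defensive.
Import GRing.Theory.
Local Open Scope ring_scope.

Definition is_ideal (R : comRingType) (I : R -> Prop) : Prop :=
  [/\ I 0, (forall x y, I x -> I y -> I (x + y)) & (forall r x, I x -> I (r * x))].

Definition noetherian (R : comRingType) : Prop :=
  forall I : nat -> R -> Prop,
    (forall m, is_ideal (I m)) ->
    (forall m x, I m x -> I m.+1 x) ->
    exists N, forall m, (N <= m)%N -> forall x, I m x -> I N x.

Definition elementary_mx (R : comRingType) (n : nat) (A : 'M[R]_n) : Prop :=
  exists i j : 'I_n, i != j /\ exists a : R, A = 1%:M + a *: delta_mx i j.

Inductive En (R : comRingType) (n : nat) : 'M[R]_n -> Prop :=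
| En_one : En 1%:M
| En_elem A : elementary_mx A -> En A
| En_mul A B : En A -> En B -> En (A *m B)
| En_inv A B : En A -> A *m B = 1%:M -> B *m A = 1%:M -> En B.

Definition quasi_euclidean (R : comRingType) : Prop :=
  forall n, (2 <= n)%N -> forall r : 'rV[R]_n,
    exists (E : 'M[R]_n) (d : R),
      En E /\ r *m E = \row_j (if (val j == 0)%N then d else 0).

(* The module M = R/a_0 x ... x R/a_{k-1} (ideals indexed 0..k-1; the paper's
   a_1..a_k).  An element of M is represented by a row of representatives
   in R^k; a row (m_1..m_n) in M^n by a matrix X : 'M_(n,k) whose j-th row
   gives the coordinates of m_j. *)

Definition mod_eq (R : comRingType) (n k : nat) (a : nat -> R -> Prop)
  (X Y : 'M[R]_(n, k)) : Prop :=
  forall (j : 'I_n) (l : 'I_k), a (val l) (X j l - Y j l).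

Definition unimodular (R : comRingType) (n k : nat) (a : nat -> R -> Prop)
  (X : 'M[R]_(n, k)) : Prop :=
  forall x : 'rV[R]_k, exists c : 'rV[R]_n,
    forall l : 'I_k, a (val l) ((c *m X) ord0 l - x ord0 l).

(* Right action of A in GL_n(R): (m A)_j = sum_i m_i A_ij, i.e. on the
   coordinate matrix X it is A^T *m X. *)
Definition act (R : comRingType) (n k : nat) (A : 'M[R]_n) (X : 'M[R]_(n, k))
  : 'M[R]_(n, k) := A^T *m X.

Definition normal_form (R : comRingType) (n k : nat) (delta : R) : 'M[R]_(n, k) :=
  \matrix_(j < n, l < k)
    (if (val j == val l)%N then (if (val l == 0)%N then delta else 1) else 0).

Definition unit_mod (R : comRingType) (I : R -> Prop) (delta : R) : Prop :=
  exists u : R, I (delta * u - 1).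

(* Main.v *)
Require Import Defs.
From HB Require Import structures.
From mathcomp Require Import all_boot all_order all_algebra.
From mathcomp Require Import ring zify.
Set Implicit Arguments. Unset Strict Implicit. Unset Printing Implicit Defensive.
Import GRing.Theory.
Local Open Scope ring_scope.

Section Gen.
Variable R : comRingType.

Lemma act_entry n k (E : 'M[R]_n) (X : 'M[R]_(n,k)) r l :
  act E X r l = \sum_t E t r * X t l.
Proof. rewrite /act mxE; apply: eq_bigr => t _; by rewrite mxE. Qed.

Lemma act_mul n k (E1 E2 : 'M[R]_n) (X : 'M[R]_(n,k)) :
  act (E1 *m E2) X = act E2 (act E1 X).
Proof. by rewrite /act trmx_mul mulmxA. Qed.

Lemma act1 n k (X : 'M[R]_(n,k)) : act 1%:M X = X.
Proof. by rewrite /act trmx1 mul1mx. Qed.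

Lemma nilp_mul n (D : 'M[R]_n) x y : D *m D = 0 ->
  (1%:M + x *: D) *m (1%:M + y *: D) = 1%:M + (x + y) *: D.
Proof.
move=> dd; rewrite mulmxDl !mulmxDr !mul1mx mulmx1 -!scalemxAl -scalemxAr dd.
by rewrite !scaler0 addr0 scalerDl (addrC (x *: D)) addrA.
Qed.

Lemma En_invex n (E : 'M[R]_n) : En E -> exists F, E *m F = 1%:M /\ F *m E = 1%:M.
Proof.
elim=> {E}.
- by exists 1%:M; rewrite mul1mx.
- move=> A [i [j [ij [c ->]]]]; exists (1%:M + (- c) *: delta_mx i j).
  have dd : delta_mx i j *m delta_mx i j = 0 :> 'M[R]_n.
    by rewrite mul_delta_mx_cond eq_sym (negbTE ij) mulr0n.
  by split; rewrite nilp_mul // ?addrN ?addNr scale0r addr0.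
- move=> A B _ [FA [HA1 HA2]] _ [FB [HB1 HB2]]; exists (FB *m FA); split.
  + by rewrite mulmxA -(mulmxA A) HB1 mulmx1 HA1.
  + by rewrite mulmxA -(mulmxA FB) HA2 mulmx1 HB2.
- by move=> A B _ _ H1 H2; exists A.
Qed.
End Gen.

Section Ideal.
Variable R : comRingType.
Variable I : R -> Prop.
Hypothesis HI : is_ideal I.

Lemma I0 : I 0. Proof. by case: HI. Qed.
Lemma ID x y : I x -> I y -> I (x + y). Proof. by case: HI => _ H _; apply: H. Qed.
Lemma IM r x : I x -> I (r * x). Proof. by case: HI => _ _ H; apply: H. Qed.
Lemma IMr r x : I x -> I (x * r). Proof. by rewrite mulrC; apply: IM. Qed.
Lemma IN x : I x -> I (- x). Proof. by move=> h; rewrite -mulN1r; apply: IM. Qed.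
Lemma IB x y : I x -> I y -> I (x - y). Proof. by move=> hx hy; apply: ID => //; apply: IN. Qed.
Lemma Ieq x y : I x -> x = y -> I y. Proof. by move=> h <-. Qed.
Lemma Isum (T : Type) (s : seq T) (P : pred T) (F : T -> R) :
  (forall t, P t -> I (F t)) -> I (\sum_(t <- s | P t) F t).
Proof. by move=> h; apply: (big_ind I) => //; [apply: I0 | apply: ID]. Qed.
Lemma Isum1 (T : Type) (s : seq T) (F : T -> R) :
  (forall t, I (F t)) -> I (\sum_(t <- s) F t).
Proof. by move=> h; apply: (big_ind I) => //; [apply: I0 | apply: ID]. Qed.
End Ideal.

Section Mod.
Variable R : comRingType.
Variable a : nat -> R -> Prop.
Variable k : nat.
Hypothesis Hid : forall i, (i < k)%N -> is_ideal (a i).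

Lemma Hidl (l : 'I_k) : is_ideal (a l). Proof. exact: Hid. Qed.

Lemma mod_eq_refl n (X : 'M[R]_(n,k)) : mod_eq a X X.
Proof. by move=> j l; rewrite subrr; apply: I0 (Hidl l). Qed.

Lemma mod_eq_trans n (X Y Z : 'M[R]_(n,k)) : mod_eq a X Y -> mod_eq a Y Z -> mod_eq a X Z.
Proof.
move=> h1 h2 j l; apply: Ieq (ID (Hidl l) (h1 j l) (h2 j l)) _.
by rewrite addrA subrK.
Qed.

Lemma mod_eq_act n (E : 'M[R]_n) (X Y : 'M[R]_(n,k)) :
  mod_eq a X Y -> mod_eq a (act E X) (act E Y).
Proof.
move=> h j l; rewrite !act_entry -sumrB.
apply: (Isum1 (Hidl l)) => t; rewrite -mulrBr; apply: (IM (Hidl l)); exact: h.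
Qed.

Definition reach n (X Y : 'M[R]_(n,k)) := exists E, En E /\ mod_eq a (act E X) Y.

Lemma reach_refl n (X : 'M[R]_(n,k)) : reach X X.
Proof. by exists 1%:M; split; [constructor | rewrite act1; apply: mod_eq_refl]. Qed.

Lemma reach_trans n (X Y Z : 'M[R]_(n,k)) : reach X Y -> reach Y Z -> reach X Z.
Proof.
move=> [E1 [h1 m1]] [E2 [h2 m2]]; exists (E1 *m E2); split; first exact: En_mul.
rewrite act_mul; apply: mod_eq_trans m2; exact: mod_eq_act.
Qed.

Lemma reach_act n (X : 'M[R]_(n,k)) E : En E -> reach X (act E X).
Proof. by move=> h; exists E; split => //; apply: mod_eq_refl. Qed.

Lemma reach_mod n (X Y : 'M[R]_(n,k)) : mod_eq a X Y -> reach X Y.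
Proof. by move=> h; exists 1%:M; split; [constructor | rewrite act1]. Qed.

Lemma unimod_mod n (X Y : 'M[R]_(n,k)) : mod_eq a X Y -> unimodular a X -> unimodular a Y.
Proof.
move=> h u x; have [c hc] := u x; exists c => l.
have e : (c *m Y) ord0 l - x ord0 l =
   ((c *m X) ord0 l - x ord0 l) - \sum_t c ord0 t * (X t l - Y t l).
  have -> : \sum_t c ord0 t * (X t l - Y t l) =
     \sum_t c ord0 t * X t l - \sum_t c ord0 t * Y t l.
    by rewrite -sumrB; apply: eq_bigr => t _; rewrite mulrBr.
  rewrite !mxE; ring.
rewrite e; apply: (IB (Hidl l)); first exact: hc. apply: (Isum1 (Hidl l)) => t.
apply: (IM (Hidl l)); exact: h.
Qed.
End Mod.

Section Ops.
Variable R : comRingType.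

Lemma unimod_act (a : nat -> R -> Prop) n k (E : 'M[R]_n) (X : 'M[R]_(n,k)) :
  En E -> unimodular a X -> unimodular a (act E X).
Proof.
move=> hE u x; have [F [EF _]] := En_invex hE; have [c hc] := u x.
exists (c *m F^T) => l; rewrite /act mulmxA -(mulmxA c) -trmx_mul EF trmx1 mulmx1.
exact: hc.
Qed.

Lemma delta_mul_entry n k (i j : 'I_n) (X : 'M[R]_(n,k)) r l :
  (delta_mx i j *m X) r l = (r == i)%:R * X j l.
Proof.
rewrite mxE (bigD1 j) //= big1 => [|t tj]; rewrite !mxE ?eqxx ?(negbTE tj) ?andbF ?mul0r //.
by rewrite andbT addr0.
Qed.

Definition rowop n k (p : 'I_n) (c : 'I_n -> R) (X : 'M[R]_(n,k)) :=
  \matrix_(r, l) (X r l + (r == p)%:R * \sum_t c t * X t l).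
Definition colop n k (s : 'I_n) (w : 'I_n -> R) (X : 'M[R]_(n,k)) :=
  \matrix_(r, l) (X r l + w r * X s l).

Lemma act_rowop n k p (c : 'I_n -> R) (X : 'M[R]_(n,k)) :
  act (1%:M + \sum_j c j *: delta_mx j p) X = rowop p c X.
Proof.
apply/matrixP => r l; rewrite /act linearD /= trmx1 linear_sum /= mulmxDl mul1mx.
rewrite mulmx_suml !mxE summxE; congr (_ + _).
rewrite mulr_sumr; apply: eq_bigr => j _.
by rewrite linearZ /= trmx_delta -scalemxAl mxE delta_mul_entry mulrCA.
Qed.

Lemma act_colop n k s (w : 'I_n -> R) (X : 'M[R]_(n,k)) :
  act (1%:M + \sum_j w j *: delta_mx s j) X = colop s w X.
Proof.
apply/matrixP => r l; rewrite /act linearD /= trmx1 linear_sum /= mulmxDl mul1mx.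
rewrite mulmx_suml !mxE summxE; congr (_ + _).
rewrite (bigD1 r) //= big1 => [|j jr].
  by rewrite linearZ /= trmx_delta -scalemxAl mxE delta_mul_entry eqxx mul1r addr0.
by rewrite linearZ /= trmx_delta -scalemxAl mxE delta_mul_entry eq_sym (negbTE jr) mul0r mulr0.
Qed.

Lemma En_rowmx n (p : 'I_n) (c : 'I_n -> R) (s : seq 'I_n) : c p = 0 ->
  En (1%:M + \sum_(j <- s) c j *: delta_mx j p).
Proof.
move=> cp; elim: s => [|j s IH]; first by rewrite big_nil addr0; constructor.
have -> : 1%:M + \sum_(i <- j :: s) c i *: delta_mx i p =
   (1%:M + \sum_(i <- s) c i *: delta_mx i p) *m (1%:M + c j *: delta_mx j p).
  rewrite big_cons mulmxDr mulmx1 mulmxDl mul1mx mulmx_suml.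
  have -> : \sum_(i <- s) c i *: delta_mx i p *m (c j *: delta_mx j p) = 0.
    apply: big1 => i _; rewrite -scalemxAl -scalemxAr mul_delta_mx_cond.
    case: (eqVneq p j) => [<-|pj]; first by rewrite cp !scale0r scaler0.
    by rewrite mulr0n !scaler0.
  by rewrite addr0 addrAC addrA.
apply: En_mul IH _; case: (eqVneq j p) => [->|jp].
  by rewrite cp scale0r addr0; constructor.
by apply: En_elem; exists j, p; split => //; exists (c j).
Qed.

Lemma En_colmx n (q : 'I_n) (w : 'I_n -> R) (s : seq 'I_n) : w q = 0 ->
  En (1%:M + \sum_(j <- s) w j *: delta_mx q j).
Proof.
move=> cp; elim: s => [|j s IH]; first by rewrite big_nil addr0; constructor.
have -> : 1%:M + \sum_(i <- j :: s) w i *: delta_mx q i =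
   (1%:M + \sum_(i <- s) w i *: delta_mx q i) *m (1%:M + w j *: delta_mx q j).
  rewrite big_cons mulmxDr mulmx1 mulmxDl mul1mx mulmx_suml.
  have -> : \sum_(i <- s) w i *: delta_mx q i *m (w j *: delta_mx q j) = 0.
    apply: big1 => i _; rewrite -scalemxAl -scalemxAr mul_delta_mx_cond.
    case: (eqVneq i q) => [->|iq]; first by rewrite cp !scale0r.
    by rewrite mulr0n !scaler0.
  by rewrite addr0 addrAC addrA.
apply: En_mul IH _; case: (eqVneq q j) => [<-|jp].
  by rewrite cp scale0r addr0; constructor.
by apply: En_elem; exists q, j; split => //; exists (w j).
Qed.

Lemma En_rowop n k p (c : 'I_n -> R) (X : 'M[R]_(n,k)) :
  c p = 0 -> exists E, En E /\ act E X = rowop p c X.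
Proof. move=> cp; exists (1%:M + \sum_j c j *: delta_mx j p); split; [exact: En_rowmx | exact: act_rowop]. Qed.

Lemma En_colop n k s (w : 'I_n -> R) (X : 'M[R]_(n,k)) :
  w s = 0 -> exists E, En E /\ act E X = colop s w X.
Proof. move=> cp; exists (1%:M + \sum_j w j *: delta_mx s j); split; [exact: En_colmx | exact: act_colop]. Qed.
End Ops.

Section Emb.
Variable R : comRingType.
Variable n : nat.
Variable p : 'I_n.+1.

Definition emb (F : 'M[R]_n) : 'M[R]_n.+1 :=
  \matrix_(r, s) match unlift p r, unlift p s with
                 | Some i, Some j => F i j | _, _ => (r == s)%:R end.

Lemma emb_ll F i j : emb F (lift p i) (lift p j) = F i j.
Proof. by rewrite mxE !liftK. Qed.
Lemma emb_pl F s : emb F p s = (p == s)%:R.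
Proof. by rewrite mxE unlift_none. Qed.
Lemma emb_lp F r : emb F r p = (r == p)%:R.
Proof. by rewrite mxE unlift_none; case: (unlift p r). Qed.

Lemma sum_lift (F : 'I_n.+1 -> R) : \sum_t F t = F p + \sum_i F (lift p i).
Proof. by rewrite (bigD1_ord p) //=. Qed.

Lemma lift_neqp i : (lift p i == p) = false.
Proof. by rewrite eq_sym (negbTE (neq_lift _ _)). Qed.
Lemma lift_neqp' i : (p == lift p i) = false.
Proof. by rewrite (negbTE (neq_lift _ _)). Qed.

Ltac esimp := rewrite ?eqxx ?lift_neqp ?lift_neqp'  /= ?mulr0n ?mulr1n
   ?mulr0 ?mul0r ?mulr1 ?mul1r ?add0r ?addr0 ?mulr0n ?addr0.

Lemma emb_mul A B : emb (A *m B) = emb A *m emb B.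
Proof.
apply/matrixP => r s; rewrite [RHS]mxE sum_lift.
case: (unliftP p r) => [i ->|->]; case: (unliftP p s) => [j ->|->];
  rewrite ?emb_ll ?emb_lp ?emb_pl; esimp.
- by rewrite mxE; apply: eq_bigr => t _; rewrite !emb_ll.
- by rewrite big1 ?addr0 // => t _; rewrite emb_lp; esimp.
- by rewrite big1 ?addr0 // => t _; rewrite emb_pl; esimp.
- by rewrite big1 ?addr0 // => t _; rewrite emb_pl; esimp.
Qed.

Lemma emb1 : emb 1%:M = 1%:M.
Proof.
apply/matrixP => r s; rewrite [RHS]mxE.
case: (unliftP p r) => [i ->|->]; case: (unliftP p s) => [j ->|->];
  rewrite ?emb_ll ?emb_lp ?emb_pl; esimp => //.
by rewrite mxE (inj_eq (@lift_inj _ p)).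
Qed.

Lemma emb_elem F : elementary_mx F -> elementary_mx (emb F).
Proof.
move=> [i [j [ij [c ->]]]]; exists (lift p i), (lift p j); split.
  by rewrite (inj_eq (@lift_inj _ p)).
exists c; apply/matrixP => r s; rewrite !mxE.
case: (unliftP p r) => [r' ->|->]; case: (unliftP p s) => [s' ->|->];
  rewrite ?liftK ?unlift_none ?mxE ?(inj_eq (@lift_inj _ p)) //; esimp => //;
  by rewrite ?andbF ?mulr0.
Qed.

Lemma En_emb F : En F -> En (emb F).
Proof.
elim=> {F}.
- by rewrite emb1; constructor.
- by move=> A h; apply: En_elem; apply: emb_elem.
- by move=> A B _ hA _ hB; rewrite emb_mul; apply: En_mul.
- move=> A B _ hA h1 h2; apply: (En_inv hA); by rewrite -emb_mul ?h1 ?h2 emb1.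
Qed.

Lemma act_emb_p k F (X : 'M[R]_(n.+1,k)) l : act (emb F) X p l = X p l.
Proof.
rewrite act_entry sum_lift emb_pl; esimp; rewrite big1 ?addr0 // => t _.
by rewrite emb_lp; esimp.
Qed.

Lemma act_emb_l k F (X : 'M[R]_(n.+1,k)) i l :
  act (emb F) X (lift p i) l = \sum_t F t i * X (lift p t) l.
Proof.
rewrite act_entry sum_lift emb_pl; esimp.
by apply: eq_bigr => t _; rewrite emb_ll.
Qed.
End Emb.

Section Main.
Variable R : comRingType.
Variable a : nat -> R -> Prop.

Lemma reach_unimod k n (X Y : 'M[R]_(n,k)) :
  (forall i, (i < k)%N -> is_ideal (a i)) ->
  reach a X Y -> unimodular a X -> unimodular a Y.
Proof.
move=> Hid [E [hE hm]] u; apply: (unimod_mod Hid hm); exact: unimod_act.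
Qed.

Lemma qe_step k n (X : 'M[R]_(n,k)) (l : 'I_k) :
  quasi_euclidean R -> (2 <= n)%N ->
  exists E d, En E /\ forall j : 'I_n, act E X j l = if val j == 0%N then d else 0.
Proof.
move=> QE n2; have [E [d [hE he]]] := QE n n2 (\row_t X t l).
exists E, d; split => // j; have := congr1 (fun M : 'M[R]_(1,n) => M ord0 j) he; rewrite !mxE => <-.
apply: eq_bigr => t _; by rewrite !mxE mulrC.
Qed.

Lemma unimod_col k n (X : 'M[R]_(n,k)) (l : 'I_k) :
  unimodular a X -> exists c : 'I_n -> R, a l (\sum_t c t * X t l - 1).
Proof.
move=> u; have [c hc] := u (delta_mx 0 l); exists (fun t => c ord0 t).
have := hc l; by rewrite !mxE !eqxx.
Qed.

Lemma sum_delta n (c : 'I_n -> R) p : \sum_t c t * (t == p)%:R = c p.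
Proof.
rewrite (bigD1 p) //= big1 ?eqxx ?mulr1 ?addr0 // => t tp.
by rewrite (negbTE tp) mulr0.
Qed.

Lemma sum_if0 n (c : 'I_n -> R) (p : 'I_n) (f : 'I_n -> R) :
  \sum_t (if t == p then c t else 0) * f t = c p * f p.
Proof.
rewrite (bigD1 p) //= big1 ?eqxx ?addr0 // => t tp.
by rewrite (negbTE tp) mul0r.
Qed.
End Main.

Section Main2.
Variable R : comRingType.
Variable a : nat -> R -> Prop.
Variable k : nat.
Hypothesis Hid : forall i, (i < k)%N -> is_ideal (a i).

Lemma move_pivot n (Y : 'M[R]_(n,k)) (l : 'I_k) (p q : 'I_n) d c :
  p != q -> (forall j, Y j l = if j == q then d else 0) -> a l (c * d - 1) ->
  exists Z, reach a Y Z /\ a l (Z p l - 1).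
Proof.
move=> pq hY hc.
have [E [hE hact]] := En_rowop Y (c := fun t => if t == q then c else 0) (p := p)
  (ifN_eq _ _ pq).
exists (act E Y); split; first exact: (reach_act Hid).
rewrite hact mxE eqxx mul1r sum_if0 !hY eqxx (negbTE pq) add0r; exact: hc.
Qed.

Lemma fix_one n (Z : 'M[R]_(n,k)) (l : 'I_k) (s q : 'I_n) :
  s != q -> a l (Z q l - 1) ->
  exists W, reach a Z W /\ a l (W s l - 1).
Proof.
move=> sq hq; have Il := Hidl Hid l.
have [E [hE hact]] := En_rowop Z (c := fun t => if t == q then 1 - Z s l else 0) (p := s)
  (ifN_eq _ _ sq).
exists (act E Z); split; first exact: (reach_act Hid).
rewrite hact mxE eqxx mul1r sum_if0.
apply: (Ieq (IM Il (1 - Z s l) hq)); ring.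
Qed.

Lemma clear_col n (Z : 'M[R]_(n,k)) (l : 'I_k) (s : 'I_n) :
  a l (Z s l - 1) ->
  exists W, reach a Z W /\ forall j, a l (W j l - (j == s)%:R).
Proof.
move=> hs; have Il := Hidl Hid l.
have [E [hE hact]] := En_colop Z (w := fun t => if t == s then 0 else - Z t l) (s := s)
  ltac:(by rewrite /= eqxx).
exists (act E Z); split; first exact: (reach_act Hid).
move=> j; rewrite hact mxE; case: (eqVneq j s) => [->|js].
  by rewrite mul0r addr0.
rewrite /= subr0.
apply: (Ieq (IM Il (- Z j l) hs)); ring.
Qed.
End Main2.

Lemma sum_minus (R : comRingType) n (c f : 'I_n -> R) (p : 'I_n) :
  \sum_t (if t == p then 0 else - c t) * f t = - (\sum_t c t * f t - c p * f p).
Proof.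
rewrite (bigD1 p) //= [in RHS](bigD1 p) //= eqxx mul0r add0r addrAC subrr add0r.
rewrite -sumrN; apply: eq_bigr => t tp; by rewrite (negbTE tp) mulNr.
Qed.

Section Main3.
Variable R : comRingType.
Variable a : nat -> R -> Prop.
Variable k' : nat.
Hypothesis Hid : forall i, (i < k'.+1)%N -> is_ideal (a i).
Hypothesis Hch : forall i j x, (i <= j)%N -> (j < k'.+1)%N -> a j x -> a i x.

Let Ik : is_ideal (a k') := Hid (ltnSn k').

Lemma cp_in n (Z : 'M[R]_(n,k'.+1)) (p : 'I_n) (c : 'I_n -> R) :
  (forall j, a k' (Z j ord_max - (j == p)%:R)) ->
  a k' (\sum_t c t * Z t ord_max) -> a k' (c p).
Proof.
move=> hZ hs.
have -> : c p = \sum_t c t * Z t ord_max - \sum_t c t * (Z t ord_max - (t == p)%:R).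
  have -> : \sum_t c t * (Z t ord_max - (t == p)%:R) =
     \sum_t c t * Z t ord_max - \sum_t c t * (t == p)%:R.
    by rewrite -sumrB; apply: eq_bigr => t _; rewrite mulrBr.
  rewrite sum_delta; ring.
apply: (IB Ik) => //; apply: (Isum1 Ik) => t; apply: (IM Ik); exact: hZ.
Qed.

Lemma clear_row n (Z : 'M[R]_(n,k'.+1)) (p : 'I_n) :
  unimodular a Z -> (forall j, a k' (Z j ord_max - (j == p)%:R)) ->
  exists W, reach a Z W /\ (forall j, a k' (W j ord_max - (j == p)%:R))
    /\ (forall l : 'I_k', a l (W p (lift ord_max l))).
Proof.
move=> u hZ.
have [c hc] := u (\row_m (if m == ord_max then 0 else Z p m)).
have hc0 : a k' (\sum_t c ord0 t * Z t ord_max).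
  have := hc ord_max; rewrite !mxE eqxx subr0 => h.
  by apply: Ieq h _.
have cp := cp_in hZ hc0.
have [E [hE hact]] := En_rowop Z (c := fun t => if t == p then 0 else - c ord0 t) (p := p)
  ltac:(by rewrite /= eqxx).
exists (act E Z); split; first exact: (reach_act Hid).
split.
  move=> j; rewrite hact mxE sum_minus; case: (eqVneq j p) => [->|jp]; last first.
    by rewrite /= mul0r addr0 subr0; have := hZ j; rewrite (negbTE jp) /= subr0.
  rewrite /= mul1r.
  have -> : Z p ord_max + - (\sum_t c ord0 t * Z t ord_max - c ord0 p * Z p ord_max) - 1
     = (Z p ord_max - 1) - \sum_t c ord0 t * Z t ord_max + c ord0 p * Z p ord_max.
    by ring.
  have hp := hZ p; rewrite eqxx /= in hp.
  apply: (ID Ik); first by apply: (IB Ik).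
  by apply: (IMr Ik).
move=> l; have Il := Hid (ltn_ord (lift ord_max l)).
have hl : (lift ord_max l <= k')%N by rewrite -ltnS.
rewrite hact mxE sum_minus eqxx mul1r.
have := hc (lift ord_max l); rewrite !mxE eq_sym (negbTE (neq_lift _ _)) => h.
have -> : Z p (lift ord_max l) + - (\sum_t c ord0 t * Z t (lift ord_max l)
       - c ord0 p * Z p (lift ord_max l))
   = - (\sum_t c ord0 t * Z t (lift ord_max l) - Z p (lift ord_max l))
       + c ord0 p * Z p (lift ord_max l) by ring.
rewrite -[X in a X _]lift_max.
apply: (ID Il); first by apply: (IN Il); apply: Ieq h _.
by apply: (IMr Il); apply: Hch cp.
Qed.
End Main3.

Section Main4.
Variable R : comRingType.
Variable a : nat -> R -> Prop.
Variables k' n' : nat.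
Hypothesis Hid : forall i, (i < k'.+1)%N -> is_ideal (a i).
Hypothesis Hch : forall i j x, (i <= j)%N -> (j < k'.+1)%N -> a j x -> a i x.
Let Ik : is_ideal (a k') := Hid (ltnSn k').
Variable p : 'I_n'.+1.
Hypothesis hp : val p = k'.
Variable W : 'M[R]_(n'.+1, k'.+1).
Hypothesis hcol : forall j, a k' (W j ord_max - (j == p)%:R).
Hypothesis hrow : forall l : 'I_k', a l (W p (lift ord_max l)).

Definition subY : 'M[R]_(n', k') := \matrix_(i, l) W (lift p i) (lift ord_max l).

Lemma sub_unimod : unimodular a W -> unimodular a subY.
Proof.
move=> u x.
have [c hc] := u (\row_m (if unlift ord_max m is Some m' then x ord0 m' else 0)).
have hc0 : a k' (\sum_t c ord0 t * W t ord_max).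
  have := hc ord_max; rewrite !mxE unlift_none subr0 => h.
  by apply: Ieq h _.
have cp := cp_in Hid hcol hc0.
exists (\row_i c ord0 (lift p i)) => l.
have Il := Hid (ltn_ord (lift ord_max l)).
have := hc (lift ord_max l); rewrite !mxE liftK => h.
have -> : \sum_j (\row_i c ord0 (lift p i)) ord0 j * subY j l
  = \sum_t c ord0 t * W t (lift ord_max l) - c ord0 p * W p (lift ord_max l).
  rewrite (sum_lift p) addrAC subrr add0r; apply: eq_bigr => i _; by rewrite !mxE.
have -> : \sum_t c ord0 t * W t (lift ord_max l) - c ord0 p * W p (lift ord_max l) - x ord0 l
  = (\sum_t c ord0 t * W t (lift ord_max l) - x ord0 l) - c ord0 p * W p (lift ord_max l).
  by ring.
rewrite -[X in a X _]lift_max.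
apply: (IB Il); first exact: h.
apply: (IMr Il); apply: Hch cp => //; rewrite lift_max; exact: ltnW.
Qed.

Lemma bump_eq (i l : nat) : (l < k')%N -> (bump k' i == l) = (i == l).
Proof.
move=> lk; rewrite /bump; case: (leqP k' i) => h /=.
  by apply/eqP/eqP => e; exfalso; move: h lk; rewrite ?e; lia.
by rewrite add0n.
Qed.

Lemma final_step (F : 'M[R]_n') (delta : R) : (0 < k')%N -> En F ->
  mod_eq a (act F subY) (normal_form n' k' delta) ->
  reach a W (normal_form n'.+1 k'.+1 delta).
Proof.
move=> k0 hF hm; exists (emb p F); split; first exact: En_emb.
move=> r l.
case: (unliftP p r) => [i ->|->]; case: (unliftP ord_max l) => [l' ->|->].
- rewrite act_emb_l.
  have := hm i l'; rewrite act_entry !mxE /=.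
  have -> : \sum_t F t i * subY t l' = \sum_t F t i * W (lift p t) (lift ord_max l').
    by apply: eq_bigr => t _; rewrite mxE.
  rewrite (_ : bump k' l' = l'); last by rewrite /bump leqNgt ltn_ord.
  by rewrite hp bump_eq.
- rewrite act_emb_l !mxE /=.
  have -> : (bump p i == k') = false.
    apply/negbTE; rewrite eq_sym -hp; exact: neq_bump.
  rewrite subr0; apply: (Isum1 Ik) => t; apply: (IM Ik).
  have := hcol (lift p t); by rewrite eq_sym (negbTE (neq_lift _ _)) /= subr0.
- rewrite act_emb_p !mxE /=.
  rewrite (_ : bump k' l' = l'); last by rewrite /bump leqNgt ltn_ord.
  rewrite (_ : (p == l' :> nat) = false); last by rewrite hp; apply/negbTE; rewrite neq_ltn ltn_ord orbT.
  rewrite subr0; exact: hrow.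
- rewrite act_emb_p !mxE /= hp eqxx.
  have -> : (k' == 0%N) = false by case: (k') k0.
  have := hcol p; by rewrite eqxx.
Qed.
End Main4.

Section Final.
Variable R : comRingType.
Variable a : nat -> R -> Prop.
Hypothesis QE : quasi_euclidean R.

Lemma chain_gen k : (forall i, (i.+1 < k)%N -> forall x, a i.+1 x -> a i x) ->
  forall i j x, (i <= j)%N -> (j < k)%N -> a j x -> a i x.
Proof.
move=> H i j x; elim: j => [|j IH] ij jk hx.
  by move: ij; rewrite leqn0 => /eqP ->.
move: ij; rewrite leq_eqVlt => /orP [/eqP -> //|ij].
apply: IH => //; first exact: ltnW.
exact: H.
Qed.

Lemma main k : forall n (X : 'M[R]_(n,k)), (0 < k)%N ->
  (forall i, (i < k)%N -> is_ideal (a i)) ->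
  (forall i, (i.+1 < k)%N -> forall x, a i.+1 x -> a i x) ->
  (k <= n)%N -> unimodular a X ->
  (exists d, unit_mod (a 0%N) d /\ reach a X (normal_form n k d)) /\
  ((k < n)%N -> reach a X (normal_form n k 1)).
Proof.
elim: k => [|k' IH] n X // _ Hid Hch kn u.
case: n X kn u => [|n'] X kn u //.
have Hc := chain_gen Hch.
have [n0|npos] := eqVneq n' 0%N.
  subst n'; have k0 : k' = 0%N by move: kn; rewrite ltnS leqn0 => /eqP.
  subst k'.
  have [c hc] := unimod_col (X := X) ord0 u.
  rewrite big_ord1 in hc.
  split => //; exists (X ord0 ord0); split.
    by exists (c ord0); rewrite mulrC.
  apply: reach_mod => j l; rewrite !(ord1 j) !(ord1 l) !mxE /= subrr.
  exact: (I0 (Hid 0%N isT)).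
have n2 : (2 <= n'.+1)%N by rewrite ltnS lt0n.
have Ik : is_ideal (a k') := Hid k' (ltnSn k').
have [E1 [d [hE1 hact]]] := qe_step X ord_max QE n2.
have hY : forall j, act E1 X j ord_max = if j == ord0 then d else 0 by move=> j; rewrite hact.
have u1 := unimod_act hE1 u.
have [c hc] := unimod_col (X := act E1 X) ord_max u1.
have hu : a k' (c ord0 * d - 1).
  move: hc; rewrite (bigD1 ord0) //= big1 ?addr0 ?hY ?eqxx //.
  by move=> t t0; rewrite hY (negbTE t0) mulr0.
have r1 : reach a X (act E1 X) := reach_act Hid X hE1.
have [k0|kpos] := eqVneq k' 0%N.
  subst k'; split.
    exists d; split; first by exists (c ord0); rewrite mulrC.
    apply: (reach_trans Hid r1); apply: reach_mod => j l.
    have -> : l = ord_max by apply/val_inj; rewrite (ord1 l).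
    rewrite hY !mxE /=; case: (eqVneq j ord0) => [->|j0] /=; first by rewrite subrr; exact: I0.
    have j0' : (val j == 0%N) = false by apply/negbTE; rewrite -val_eqE in j0.
    by rewrite j0' subrr; exact: I0.
  move=> _.
  have hq : (1 < n'.+1)%N by rewrite ltnS lt0n.
  pose q : 'I_n'.+1 := inord 1.
  have q0 : q != ord0 by rewrite -val_eqE /= inordK.
  have [Z [rZ hZ]] := move_pivot Hid (Y := act E1 X) (l := ord_max) q0 hY hu.
  have [W [rW hW]] := fix_one Hid (Z := Z) (l := ord_max) (s := ord0) (q := q)
    ltac:(by rewrite eq_sym) hZ.
  have [V [rV hV]] := clear_col Hid (Z := W) (l := ord_max) (s := ord0) hW.
  apply: (reach_trans Hid r1); apply: (reach_trans Hid rZ); apply: (reach_trans Hid rW).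
  apply: (reach_trans Hid rV); apply: reach_mod => j l.
  have -> : l = ord_max by apply/val_inj; rewrite (ord1 l).
  rewrite !mxE /=; have := hV j; case: (eqVneq j ord0) => [->|j0] //=.
  have j0' : (val j == 0%N) = false by apply/negbTE; rewrite -val_eqE in j0.
  by rewrite j0'.
have kn' : (k' <= n')%N by [].
have k0' : (0 < k')%N by rewrite lt0n.
pose p : 'I_n'.+1 := inord k'.
have hp : val p = k' by rewrite /= inordK.
have p0 : p != ord0 by rewrite -val_eqE /= hp.
have [Z [rZ hZ]] := move_pivot Hid (Y := act E1 X) (l := ord_max) p0 hY hu.
have [W [rW hW]] := clear_col Hid (Z := Z) (l := ord_max) (s := p) hZ.
have uW : unimodular a W.
  apply: (reach_unimod Hid rW); exact: (reach_unimod Hid rZ).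
have [V [rV [hVc hVr]]] := clear_row Hid Hc uW hW.
have uV : unimodular a V by exact: (reach_unimod Hid rV).
have uY := sub_unimod Hid Hc hVc uV.
have Hid' : forall i, (i < k')%N -> is_ideal (a i).
  by move=> i ik; apply: Hid; apply: ltnW.
have Hch' : forall i, (i.+1 < k')%N -> forall x, a i.+1 x -> a i x.
  by move=> i ik; apply: Hch; apply: ltnW.
have [[dl [hdl [F [hF hmF]]]] h2] := IH n' _ k0' Hid' Hch' kn' uY.
have rXV : reach a X V.
  apply: (reach_trans Hid r1); apply: (reach_trans Hid rZ); exact: (reach_trans Hid rW).
split.
  exists dl; split => //; apply: (reach_trans Hid rXV).
  exact: (final_step Hid hp hVc hVr k0' hF hmF).
move=> kn2; have [F2 [hF2 hmF2]] := h2 kn2.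
apply: (reach_trans Hid rXV).
exact: (final_step Hid hp hVc hVr k0' hF2 hmF2).
Qed.
End Final.

Unset Implicit Arguments.
Theorem theoremA (R : comRingType) (n k : nat) (a : nat -> R -> Prop) :
  noetherian R -> quasi_euclidean R ->
  (0 < k)%N ->
  (forall i, (i < k)%N -> is_ideal (a i)) ->
  (exists r : R, ~ a 0%N r) ->
  (forall i, (i.+1 < k)%N -> forall x, a i.+1 x -> a i x) ->
  (k <= n)%N ->
  forall X : 'M[R]_(n, k), unimodular a X ->
    (exists (E : 'M[R]_n) (delta : R),
        En E /\ unit_mod (a 0%N) delta /\ mod_eq a (act E X) (normal_form n k delta))
    /\ ((k < n)%N ->
        exists E : 'M[R]_n, En E /\ mod_eq a (act E X) (normal_form n k 1)).
Proof.
move=> _ QE k0 Hid _ Hch kn X u.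
have [[d [hd [E [hE hm]]]] h2] := main QE k0 Hid Hch kn u.
split; first by exists E, d.
move=> kn2; have [E2 [hE2 hm2]] := h2 kn2; by exists E2.
Qed.
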